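(* Let $J\subseteq S$ and let $u,v\in\mathfrak{S}_n^J$ with $u\lessdot_S v$ (a cover relation in weak order). The following are equivalent: (i) there are indices $i<j<k$, each in different $J$-regions, such that $v_k<v_i<v_j$, $v_i=v_k+1$, and $\mathrm{inv}(v)\setminus\mathrm{inv}(u)=\{(i,k)\}$; (ii) $\Pi_\downarrow^J(u)=\Pi_\downarrow^J(v)$; (iii) $\Pi_\uparrow^J(u)=\Pi_\uparrow^J(v)$.
   Context: $\mathfrak{S}_n$ is the symmetric group on $[n]$, $s_i=(i,i+1)$, $S=\{s_1,\dots,s_{n-1}\}$, one-line notation $w=w_1\cdots w_n$, $\mathrm{inv}(w)=\{(i,j):i<j,\ w_i>w_j\}$, weak order $u\le_S v\iff\mathrm{inv}(u)\subseteq\mathrm{inv}(v)$; $u\lessdot_S v$ means $\mathrm{inv}(v)\setminus\mathrm{inv}(u)=\{(i,j)\}$ for a single pair with $v_i=v_j+1$ and $\mathrm{inv}(u)\subseteq\mathrm{inv}(v)$. For $J\subseteq S$, $\mathfrak{S}_n^J$ is the set of $w$ with $w_i<w_{i+1}$ whenever $s_i\in J$. Writing $J=S\setminus\{s_{j_1},\dots,s_{j_r}\}$ with $j_1<\dots<j_r$, the $J$-regions are $\{1,\dots,j_1\},\{j_1+1,\dots,j_2\},\dots,\{j_r+1,\dots,n\}$. $w\in\mathfrak{S}_n^J$ is $(J,231)$-avoiding if there are no indices $i<j<k$ in pairwise different $J$-regions with $w_k<w_i<w_j$ and $w_i=w_k+1$, and $(J,132)$-avoiding if there are no indices $i<j<k$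 in pairwise different $J$-regions with $w_i<w_k<w_j$ and $w_k=w_i+1$. For $w\in\mathfrak{S}_n^J$, $\Pi_\downarrow^J(w)$ is the unique greatest $(J,231)$-avoiding element of $\mathfrak{S}_n^J$ that is $\le_S w$, and $\Pi_\uparrow^J(w)$ is the unique least $(J,132)$-avoiding element of $\mathfrak{S}_n^J$ that is $\ge_S w$ (both exist). *)

(* Defs.v *)
(* Permutations of [n] are 'S_n = {perm 'I_n}; positions and
   values are 0-indexed (position p : 'I_n stands for p+1, value w p for w_(p+1)).
   J ⊆ S is a set J : {set 'I_n.-1}, where j : 'I_n.-1 stands for s_(j+1),
   which swaps 0-indexed positions j and j+1. *)
From mathcomp Require Import ssreflect ssrfun ssrbool eqtype ssrnat seq choice fintype finset fingroup perm.
Set Implicit Arguments. Unset Strict Implicit. Unset Printing Implicit Defensive.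

Section Defs.
Variable n : nat.
Implicit Types (u v w : 'S_n) (J : {set 'I_n.-1}).

Definition inversions w : {set 'I_n * 'I_n} :=
  [set p : 'I_n * 'I_n | (val p.1 < val p.2) && (val (w p.2) < val (w p.1))].

Definition weakle u v : bool := inversions u \subset inversions v.

Definition weakcover u v : bool :=
  weakle u v &&
  [exists i : 'I_n, exists j : 'I_n,
     (inversions v :\: inversions u == [set (i, j)]) && (val (v i) == (val (v j)).+1)].

Definition parab J w : bool :=
  [forall j : 'I_n.-1, forall a : 'I_n, forall b : 'I_n,
     [&& j \in J, val a == val j & val b == (val j).+1] ==> (val (w a) < val (w b))%N].

(* index of the J-region containing position p: number of cut points
   s_(j+1) \notin J with j < p (cut between 0-indexed positions j and j+1) *)
Definition region J (p : 'I_n) : nat :=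
  #|[set j : 'I_n.-1 | (j \notin J) && (val j < val p)%N]|.

Definition diff_regions J (i j k : 'I_n) : bool :=
  [&& region J i != region J j, region J j != region J k & region J i != region J k].

Definition avoid231 J w : bool :=
  ~~ [exists i : 'I_n, exists j : 'I_n, exists k : 'I_n,
       [&& (val i < val j)%N, (val j < val k)%N, diff_regions J i j k,
           (val (w k) < val (w i))%N, (val (w i) < val (w j))%N &
           val (w i) == (val (w k)).+1]].

Definition avoid132 J w : bool :=
  ~~ [exists i : 'I_n, exists j : 'I_n, exists k : 'I_n,
       [&& (val i < val j)%N, (val j < val k)%N, diff_regions J i j k,
           (val (w i) < val (w k))%N, (val (w k) < val (w j))%N &
           val (w k) == (val (w i)).+1]].

Definition is_Pidown J w p : bool :=
  [&& parab J p, avoid231 J p, weakle p w &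
      [forall q : 'S_n, (parab J q && avoid231 J q && weakle q w) ==> weakle q p]].

Definition is_Piup J w p : bool :=
  [&& parab J p, avoid132 J p, weakle w p &
      [forall q : 'S_n, (parab J q && avoid132 J q && weakle w q) ==> weakle p q]].

(* the projections (they exist for w in S_n^J; the default w is never used then) *)
Definition Pidown J w : 'S_n := odflt w [pick p | is_Pidown J w p].
Definition Piup J w : 'S_n := odflt w [pick p | is_Piup J w p].

End Defs.

(* Main.v *)
Require Import Defs.
From mathcomp Require Import ssreflect ssrfun ssrbool eqtype ssrnat seq choice fintype finset fingroup perm.
From mathcomp Require Import zify.
From Stdlib Require Import Classical.
Set Implicit Arguments. Unset Strict Implicit. Unset Printing Implicit Defensive.

Lemma vo n (x : 'I_n) : val x = nat_of_ord x. Proof. by []. Qed.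

Lemma mem_inv n (w : 'S_n) (a b : 'I_n) :
  ((a, b) \in inversions w) = (val a < val b) && (val (w b) < val (w a)).
Proof. by rewrite inE. Qed.

Lemma vinj n (w : 'S_n) (a b : 'I_n) : (val (w a) == val (w b)) = (a == b).
Proof. by rewrite val_eqE (inj_eq (@perm_inj _ w)). Qed.

Lemma vneq n (w : 'S_n) (a b : 'I_n) : a != b -> val (w a) != val (w b).
Proof. by rewrite vinj. Qed.

Lemma surjv n (w : 'S_n) t : t < n -> exists z : 'I_n, val (w z) = t.
Proof. move=> ht; exists ((w^-1)%g (Ordinal ht)); by rewrite permKV. Qed.

Lemma card_lt n m : m <= n -> #|[set z : 'I_n | val z < m]| = m.
Proof.
move=> hm.
have -> : [set z : 'I_n | val z < m] = (widen_ord hm) @: [set: 'I_m].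
  apply/setP => z; rewrite inE; apply/idP/imsetP.
  - move=> hz; exists (Ordinal hz) => //; exact: val_inj.
  - by case=> y _ ->; rewrite /= ltn_ord.
rewrite card_imset ?cardsT ?card_ord //.
by move=> x y /(congr1 val) /= /val_inj.
Qed.

Lemma val_count n (p : 'S_n) x :
  val (p x) = #|[set y | ((val y < val x) && ((y, x) \notin inversions p)) ||
                         ((val x < val y) && ((x, y) \in inversions p))]|.
Proof.
rewrite -[in LHS](@card_lt n (val (p x))); last exact: ltnW (ltn_ord _).
rewrite -(card_preimset _ (@perm_inj _ p)).
apply: eq_card => y; rewrite !inE /=.
have := vneq p (a := x) (b := y).
case: (eqVneq x y) => [->|ne _]; first by rewrite !ltnn.
have := vneq p ne; have : val x != val y by rewrite val_eqE.
rewrite ?vo; lia.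
Qed.

Lemma inv_inj n (p q : 'S_n) : inversions p = inversions q -> p = q.
Proof.
move=> e; apply/permP => x; apply: val_inj; by rewrite !val_count e.
Qed.

Definition sw n (w : 'S_n) (a b : 'I_n) : 'S_n := (tperm a b * w)%g.

Lemma sw_a n (w : 'S_n) a b : sw w a b a = w b.
Proof. by rewrite /sw permM tpermL. Qed.
Lemma sw_b n (w : 'S_n) a b : sw w a b b = w a.
Proof. by rewrite /sw permM tpermR. Qed.
Lemma sw_o n (w : 'S_n) a b x : x != a -> x != b -> sw w a b x = w x.
Proof. by move=> xa xb; rewrite /sw permM tpermD // eq_sym. Qed.

Lemma neqP' n (x y : 'I_n) : x <> y -> x != y.
Proof. by move/eqP. Qed.

Lemma sw_lt n (w : 'S_n) a b x y :
  (val (w a) = (val (w b)).+1 \/ val (w b) = (val (w a)).+1) ->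
  ~~ ((x == a) && (y == b)) -> ~~ ((x == b) && (y == a)) ->
  (val (sw w a b x) < val (sw w a b y)) = (val (w x) < val (w y)).
Proof.
move=> adj h1 h2; rewrite /sw !permM.
have nab : a != b -> val (w a) != val (w b) by move=> ?; apply: vneq.
case: (tpermP a b x) => [ex|ex|xa xb]; case: (tpermP a b y) => [ey|ey|ya yb]; subst;
  rewrite ?eqxx /= in h1 h2; rewrite ?ltnn //.
- have := vneq w (neqP' ya); have := vneq w (neqP' yb); rewrite ?vo in adj *; lia.
- have := vneq w (neqP' ya); have := vneq w (neqP' yb); rewrite ?vo in adj *; lia.
- have := vneq w (neqP' xa); have := vneq w (neqP' xb); rewrite ?vo in adj *; lia.
- have := vneq w (neqP' xa); have := vneq w (neqP' xb); rewrite ?vo in adj *; lia.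
Qed.

Lemma inv_sw_down n (w : 'S_n) a b : val a < val b -> val (w a) = (val (w b)).+1 ->
  inversions (sw w a b) = inversions w :\ (a, b).
Proof.
move=> hab hv; apply/setP => [[x y]]; rewrite !inE /= xpair_eqE.
have [/andP[/eqP-> /eqP->]|h2] := boolP ((x == b) && (y == a)).
  by rewrite [val b < val a]ltnNge (ltnW hab) /= andbF.
have [/andP[/eqP-> /eqP->]|h1] := boolP ((x == a) && (y == b)).
  have F : ((val (w b)).+1 < val (w b)) = false by rewrite ltnNge leqnSn.
  by rewrite sw_a sw_b hv F andbF.
rewrite sw_lt ?h1; [by rewrite ?vo | by left | by rewrite andbC | by rewrite andbC].
Qed.

Lemma inv_sw_up n (w : 'S_n) a b : val a < val b -> val (w b) = (val (w a)).+1 ->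
  inversions (sw w a b) = (a, b) |: inversions w.
Proof.
move=> hab hv; apply/setP => [[x y]]; rewrite !inE /= xpair_eqE.
have [/andP[/eqP-> /eqP->]|h2] := boolP ((x == b) && (y == a)).
  rewrite [val b < val a]ltnNge (ltnW hab) /= orbF.
  by case: eqP => // e; rewrite e ltnn in hab.
have [/andP[/eqP-> /eqP->]|h1] := boolP ((x == a) && (y == b)).
  by rewrite sw_a sw_b hv ltnSn hab.
rewrite sw_lt ?(negbTE h1); [by rewrite ?vo | by right | by rewrite andbC | by rewrite andbC].
Qed.

Lemma region_mono n (J : {set 'I_n.-1}) (x y : 'I_n) : val x <= val y -> region J x <= region J y.
Proof.
move=> hxy; apply: subset_leq_card; apply/subsetP => j; rewrite !inE => /andP[-> h] /=.
exact: leq_trans h hxy.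
Qed.

Lemma region_step n (J : {set 'I_n.-1}) (j : 'I_n.-1) (a b : 'I_n) :
  j \in J -> val a = val j -> val b = (val j).+1 -> region J a = region J b.
Proof.
move=> jJ ha hb; apply: eq_card => j'; rewrite !inE ha hb.
case: (eqVneq j' j) => [->|ne]; first by rewrite jJ.
have : val j' != val j by rewrite val_eqE.
case: (j' \in J) => //=; rewrite ?vo; lia.
Qed.

Lemma dr_lt n (J : {set 'I_n.-1}) (i j k : 'I_n) : val i < val j -> val j < val k ->
  diff_regions J i j k -> region J i < region J j /\ region J j < region J k.
Proof.
move=> hij hjk /and3P[d1 d2 _].
have m1 := region_mono J (ltnW hij); have m2 := region_mono J (ltnW hjk).
by split; rewrite ltn_neqAle ?d1 ?d2.
Qed.

Lemma lt_dr n (J : {set 'I_n.-1}) (i j k : 'I_n) :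
  region J i < region J j -> region J j < region J k -> diff_regions J i j k.
Proof. move=> h1 h2; apply/and3P; split; lia. Qed.

Lemma parab_sw n (J : {set 'I_n.-1}) (w : 'S_n) a b :
  parab J w -> (val (w a) = (val (w b)).+1 \/ val (w b) = (val (w a)).+1) ->
  region J a != region J b -> parab J (sw w a b).
Proof.
move=> pw adj hr.
apply/forallP => j; apply/forallP => a'; apply/forallP => b'.
apply/implyP => /and3P[jJ /eqP ha /eqP hb].
have rs := region_step jJ ha hb.
rewrite sw_lt //.
- move: pw => /forallP/(_ j)/forallP/(_ a')/forallP/(_ b')/implyP; apply.
  by rewrite jJ ha hb !eqxx.
- by apply/andP => -[/eqP ea /eqP eb]; subst; rewrite rs eqxx in hr.
- by apply/andP => -[/eqP ea /eqP eb]; subst; rewrite rs eqxx in hr.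
Qed.

Lemma divt (P : nat -> bool) a m : P a -> ~~ P (a + m) ->
  exists t, [/\ a <= t, t < a + m, P t & ~~ P t.+1].
Proof.
move=> Pa; elim: m => [|m IH]; first by rewrite addn0 Pa.
move=> nP; case: (boolP (P (a + m))) => h.
  by exists (a + m); split => //; [lia | lia | rewrite -addnS].
by have [t [? ? ? ?]] := IH h; exists t; split => //; lia.
Qed.

Lemma pinjv n (p : 'S_n) a b : val (p a) = val (p b) -> a = b.
Proof. by move/val_inj/perm_inj. Qed.

Lemma liftA n (J : {set 'I_n.-1}) (w p : 'S_n) x j y :
  val x < val j -> val j < val y -> diff_regions J x j y ->
  val (w x) = (val (w y)).+1 -> val (w x) < val (w j) ->
  avoid231 J p -> inversions p \subset inversions w -> (x, y) \notin inversions p.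
Proof.
move=> hxj hjy dr hadj hxjw av sub.
have isub : forall a b : 'I_n, val a < val b -> val (p b) < val (p a) ->
    val (w b) < val (w a).
  move=> a b hab hp; have := subsetP sub (a, b); rewrite !mem_inv hab hp /=.
  by move/(_ isT).
apply/negP; rewrite mem_inv => /andP[_ pyx].
have pxj : val (p x) < val (p j).
  case: (ltngtP (val (p x)) (val (p j))) => // h.
    by have := isub _ _ hxj h; rewrite ?vo in hxjw *; lia.
  by move/pinjv: h => e; rewrite e ltnn in hxj.
have mid : forall z : 'I_n, val x < val z -> val z < val y ->
    val (p y) < val (p z) -> val (p z) < val (p x) -> False.
  move=> z h1 h2 h3 h4; have := isub _ _ h1 h4; have := isub _ _ h2 h3.
  rewrite ?vo in hadj *; lia.
pose P t := [exists z : 'I_n, (val (p z) == t) && (val y <= val z)].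
have Pa : P (val (p y)) by apply/existsP; exists y; rewrite eqxx leqnn.
have nPc : ~~ P (val (p y) + (val (p x) - val (p y))).
  rewrite subnKC ?(ltnW pyx) //; apply/existsP => -[z /andP[/eqP e hz]].
  move/pinjv: e => e; rewrite e in hz; rewrite ?vo in hz hxj hjy; lia.
have [t [ht1 ht2 Pt nPt]] := divt Pa nPc.
rewrite subnKC ?(ltnW pyx) // in ht2.
case/existsP: Pt => z1 /andP[/eqP ez1 hz1].
have ht : t.+1 < n by apply: leq_ltn_trans ht2 (ltn_ord (p x)).
have [z2 ez2] := surjv p ht.
have hz2 : val z2 < val y.
  rewrite ltnNge; apply/negP => h; move/negP: nPt; apply; apply/existsP.
  by exists z2; rewrite ez2 eqxx h.
have hz2x : val z2 <= val x.
  rewrite leqNgt; apply/negP => h.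
  case: (eqVneq t.+1 (val (p x))) => e.
    have e2 : z2 = x by apply: (@pinjv _ p); rewrite ez2 e.
    by rewrite e2 ltnn in h.
  by apply: (mid z2 h hz2); move: e; rewrite ?vo in ez2 ht1 ht2 *; lia.
have [r1 r2] := dr_lt hxj hjy dr.
have m1 := region_mono J hz2x; have m2 := region_mono J hz1.
have dr2 : diff_regions J z2 j z1 by apply: lt_dr; clear -r1 r2 m1 m2; lia.
apply: (negP av); apply/existsP; exists z2; apply/existsP; exists j; apply/existsP; exists z1.
rewrite dr2 /=.
clear -ez1 ez2 hz1 hz2x hxj hjy pxj ht1 ht2.
rewrite ?vo in ez1 ez2 hz1 hz2x hxj hjy pxj ht1 ht2 *.
repeat (apply/andP; split); try lia.
all: try (apply/eqP; lia).
Qed.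

Lemma liftA' n (J : {set 'I_n.-1}) (w q : 'S_n) x j y :
  val x < val j -> val j < val y -> diff_regions J x j y ->
  val (w y) = (val (w x)).+1 -> val (w y) < val (w j) ->
  avoid132 J q -> inversions w \subset inversions q -> (x, y) \in inversions q.
Proof.
move=> hxj hjy dr hadj hyjw av sub.
have isup : forall a b : 'I_n, val a < val b -> val (w b) < val (w a) ->
    val (q b) < val (q a).
  move=> a b hab hp; have := subsetP sub (a, b); rewrite !mem_inv hab hp /=.
  by move/(_ isT).
have hxy : val x < val y by apply: ltn_trans hjy.
rewrite mem_inv hxy /=.
case: (ltngtP (val (q y)) (val (q x))) => //; last first.
  by move/pinjv => e; rewrite e ltnn in hxy.
move=> qxy.
have qyj : val (q y) < val (q j) by apply: isup.
have mid : forall z : 'I_n, val x < val z -> val z < val y ->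
    val (q x) < val (q z) -> val (q z) < val (q y) -> False.
  move=> z h1 h2 h3 h4.
  have a1 : val (w x) < val (w z).
    case: (ltngtP (val (w x)) (val (w z))) => // h.
      by have := isup _ _ h1 h; rewrite ?vo in h3 *; lia.
    by move/pinjv: h => e; rewrite e ltnn in h1.
  have a2 : val (w z) < val (w y).
    case: (ltngtP (val (w z)) (val (w y))) => // h.
      by have := isup _ _ h2 h; rewrite ?vo in h4 *; lia.
    by move/pinjv: h => e; rewrite e ltnn in h2.
  rewrite ?vo in hadj a1 a2; lia.
pose P t := [exists z : 'I_n, (val (q z) == t) && (val z <= val x)].
have Pa : P (val (q x)) by apply/existsP; exists x; rewrite eqxx leqnn.
have nPc : ~~ P (val (q x) + (val (q y) - val (q x))).
  rewrite subnKC ?(ltnW qxy) //; apply/existsP => -[z /andP[/eqP e hz]].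
  move/pinjv: e => e; rewrite e in hz; rewrite ?vo in hz hxy; lia.
have [t [ht1 ht2 Pt nPt]] := divt Pa nPc.
rewrite subnKC ?(ltnW qxy) // in ht2.
case/existsP: Pt => z1 /andP[/eqP ez1 hz1].
have ht : t.+1 < n by apply: leq_ltn_trans ht2 (ltn_ord (q y)).
have [z2 ez2] := surjv q ht.
have hz2 : val x < val z2.
  rewrite ltnNge; apply/negP => h; move/negP: nPt; apply; apply/existsP.
  by exists z2; rewrite ez2 eqxx h.
have hz2y : val y <= val z2.
  rewrite leqNgt; apply/negP => h.
  case: (eqVneq t.+1 (val (q y))) => e.
    have e2 : z2 = y by apply: (@pinjv _ q); rewrite ez2 e.
    by rewrite e2 ltnn in h.
  by apply: (mid z2 hz2 h); move: e; rewrite ?vo in ez2 ht1 ht2 *; lia.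
have [r1 r2] := dr_lt hxj hjy dr.
have m1 := region_mono J hz1; have m2 := region_mono J hz2y.
have dr2 : diff_regions J z1 j z2 by apply: lt_dr; clear -r1 r2 m1 m2; lia.
suff : False by [].
apply: (negP av); apply/existsP; exists z1; apply/existsP; exists j; apply/existsP; exists z2.
rewrite dr2 /=.
clear -ez1 ez2 hz1 hz2y hxj hjy qyj ht1 ht2.
rewrite ?vo in ez1 ez2 hz1 hz2y hxj hjy qyj ht1 ht2 *.
repeat (apply/andP; split); try lia.
all: try (apply/eqP; lia).
Qed.

Definition Idown n (J : {set 'I_n.-1}) (w : 'S_n) (i k : 'I_n) : Prop :=
  (i, k) \in inversions w /\ forall j : 'I_n, val i < val j -> val j < val k ->
    diff_regions J i j k -> val (w j) < val (w k).

Definition Iup n (J : {set 'I_n.-1}) (w : 'S_n) (i k : 'I_n) : Prop :=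
  (i, k) \notin inversions w /\ forall j : 'I_n, val i < val j -> val j < val k ->
    diff_regions J i j k -> val (w j) < val (w i).

Lemma Pidown_ex n (J : {set 'I_n.-1}) m : forall w : 'S_n, #|inversions w| < m -> parab J w ->
  exists p, is_Pidown J w p /\ forall i k, Idown J w i k -> (i, k) \in inversions p.
Proof.
elim: m => [|m IH] w hc pw; first by rewrite ltn0 in hc.
case: (boolP (avoid231 J w)) => hav.
  exists w; split; last by move=> i k [].
  apply/and4P; split => //; first exact: subxx.
  by apply/forallP => q; apply/implyP => /andP[_ ->].
move/negPn: hav => /existsP[x /existsP[j /existsP[y /and5P[hxj hjy dr hwyx /andP[hwxj /eqP hadj]]]]].
have hxy : val x < val y by apply: ltn_trans hjy.
have hinv := inv_sw_down hxy hadj.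
have hin : (x, y) \in inversions w by rewrite mem_inv hxy hwyx.
have hc' : #|inversions (sw w x y)| < m.
  by rewrite hinv; apply: leq_trans (proper_card (properD1 hin)) _.
have pw' : parab J (sw w x y).
  by apply: parab_sw => //; [left | case/and3P: dr].
have [p [/and4P[pp ap lp fp] ext]] := IH _ hc' pw'.
exists p; split.
  apply/and4P; split => //.
    by apply: subset_trans lp _; rewrite hinv; apply: subsetDl.
  apply/forallP => q; apply/implyP => /andP[/andP[pq aq] lq].
  move/forallP: fp => /(_ q)/implyP; apply; rewrite pq aq /=.
  rewrite /weakle hinv; apply/subsetP => z hz.
  rewrite in_setD1 (subsetP lq _ hz) andbT; apply/eqP => ez; subst z.
  by move: hz; apply/negP; apply: (liftA hxj hjy dr hadj hwxj aq lq).
move=> i k [hi hj]; apply: ext; split.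
  rewrite hinv in_setD1 hi andbT; apply/eqP => -[ei ek]; subst i k.
  have := hj j hxj hjy dr; clear -hwyx hwxj; rewrite ?vo in hwyx hwxj *; lia.
move=> j' h1 h2 d.
rewrite sw_lt; first exact: hj.
- by left.
- apply/andP => -[/eqP e1 /eqP e2]; subst j' k.
  have := hj x h1 h2 d; clear -hadj; rewrite ?vo in hadj *; lia.
- apply/andP => -[/eqP e1 /eqP e2]; subst j' k.
  clear -hxy h1 h2; rewrite ?vo in hxy h1 h2; lia.
Qed.

Lemma Piup_ex n (J : {set 'I_n.-1}) m : forall w : 'S_n,
  #|~: inversions w| < m -> parab J w ->
  exists p, is_Piup J w p /\ forall i k, Iup J w i k -> (i, k) \notin inversions p.
Proof.
elim: m => [|m IH] w hc pw; first by rewrite ltn0 in hc.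
case: (boolP (avoid132 J w)) => hav.
  exists w; split; last by move=> i k [].
  apply/and4P; split => //; first exact: subxx.
  by apply/forallP => q; apply/implyP => /andP[_ ->].
move/negPn: hav => /existsP[x /existsP[j /existsP[y /and5P[hxj hjy dr hwxy /andP[hwyj /eqP hadj]]]]].
have hxy : val x < val y by apply: ltn_trans hjy.
have hinv := inv_sw_up hxy hadj.
have hnin : (x, y) \notin inversions w.
  by rewrite mem_inv hxy /= -leqNgt ltnW.
have hc' : #|~: inversions (sw w x y)| < m.
  have pr : ~: inversions (sw w x y) \proper ~: inversions w.
    rewrite hinv; apply/properP; split; first by rewrite setCS subsetUr.
    by exists (x, y); rewrite ?in_setC ?hnin // in_setU1 eqxx.
  by apply: leq_trans (proper_card pr) _.
have pw' : parab J (sw w x y).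
  by apply: parab_sw => //; [right | case/and3P: dr].
have [p [/and4P[pp ap lp fp] ext]] := IH _ hc' pw'.
exists p; split.
  apply/and4P; split => //.
    by apply: subset_trans lp; rewrite hinv; apply: subsetUr.
  apply/forallP => q; apply/implyP => /andP[/andP[pq aq] lq].
  move/forallP: fp => /(_ q)/implyP; apply; rewrite pq aq /=.
  rewrite /weakle hinv; apply/subsetP => z; rewrite in_setU1 => /orP[/eqP ->|hz].
    exact: (liftA' hxj hjy dr hadj hwyj aq lq).
  exact: (subsetP lq).
move=> i k [hi hj]; apply: ext; split.
  rewrite hinv in_setU1 (negbTE hi) orbF; apply/eqP => -[ei ek]; subst i k.
  have := hj j hxj hjy dr; clear -hwyj hadj; rewrite ?vo in hwyj hadj *; lia.
move=> j' h1 h2 d.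
rewrite sw_lt; first exact: hj.
- by right.
- apply/andP => -[/eqP e1 /eqP e2]; subst j' i.
  clear -hxy h1 h2; rewrite ?vo in hxy h1 h2; lia.
- apply/andP => -[/eqP e1 /eqP e2]; subst j' i.
  have := hj y h1 h2 d; clear -hadj; rewrite ?vo in hadj *; lia.
Qed.

Lemma Pidown_uniq n (J : {set 'I_n.-1}) (w p p' : 'S_n) :
  is_Pidown J w p -> is_Pidown J w p' -> p = p'.
Proof.
move=> /and4P[pp ap lp fp] /and4P[pp' ap' lp' fp'].
move/forallP/(_ p')/implyP: fp; rewrite pp' ap' lp' => /(_ isT) h1.
move/forallP/(_ p)/implyP: fp'; rewrite pp ap lp => /(_ isT) h2.
by apply: inv_inj; apply/eqP; rewrite eqEsubset; rewrite /weakle in h1 h2; rewrite h1 h2.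
Qed.

Lemma Piup_uniq n (J : {set 'I_n.-1}) (w p p' : 'S_n) :
  is_Piup J w p -> is_Piup J w p' -> p = p'.
Proof.
move=> /and4P[pp ap lp fp] /and4P[pp' ap' lp' fp'].
move/forallP/(_ p')/implyP: fp; rewrite pp' ap' lp' => /(_ isT) h1.
move/forallP/(_ p)/implyP: fp'; rewrite pp ap lp => /(_ isT) h2.
by apply: inv_inj; apply/eqP; rewrite eqEsubset; rewrite /weakle in h1 h2; rewrite h1 h2.
Qed.

Lemma Pidown_eq n (J : {set 'I_n.-1}) (w p : 'S_n) : is_Pidown J w p -> Pidown J w = p.
Proof.
move=> hp; rewrite /Pidown; case: pickP => [p' hp' /=|none]; first exact: Pidown_uniq hp' hp.
by rewrite none in hp.
Qed.

Lemma Piup_eq n (J : {set 'I_n.-1}) (w p : 'S_n) : is_Piup J w p -> Piup J w = p.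
Proof.
move=> hp; rewrite /Piup; case: pickP => [p' hp' /=|none]; first exact: Piup_uniq hp' hp.
by rewrite none in hp.
Qed.

Lemma cover_u n (u v : 'S_n) a b : weakle u v ->
  inversions v :\: inversions u = [set (a, b)] -> val a < val b ->
  val (v a) = (val (v b)).+1 -> u = sw v a b.
Proof.
move=> le e hab hv; apply: inv_inj; rewrite inv_sw_down //; apply/setP => z.
rewrite in_setD1.
case: (eqVneq z (a, b)) => [->|nz] /=.
  have : (a, b) \in inversions v :\: inversions u by rewrite e set11.
  by rewrite inE => /andP[/negbTE].
apply/idP/idP => [hz | hz]; first exact: (subsetP le).
apply/negPn/negP => hn.
have : z \in inversions v :\: inversions u by rewrite inE hn hz.
by rewrite e inE (negbTE nz).
Qed.

Theorem lemma3p16 (n : nat) (J : {set 'I_n.-1}) (u v : 'S_n) :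
  parab J u -> parab J v -> weakcover u v ->
  [<-> (exists i j k : 'I_n,
          [/\ (val i < val j < val k)%N, diff_regions J i j k,
              (val (v k) < val (v i) < val (v j))%N, val (v i) = (val (v k)).+1 &
              inversions v :\: inversions u = [set (i, k)]]);
       Pidown J u = Pidown J v;
       Piup J u = Piup J v].
Proof.
move=> pu pv /andP[le /existsP[i /existsP[k /andP[/eqP e /eqP hv]]]].
have hd : (i, k) \in inversions v :\: inversions u by rewrite e set11.
move: (hd); rewrite inE => /andP[hniu hik].
have hik' : val i < val k by move: hik; rewrite mem_inv => /andP[].
have [pdv [hpdv extdv]] := @Pidown_ex _ J _ v (ltnSn _) pv.
have [pdu [hpdu _]] := @Pidown_ex _ J _ u (ltnSn _) pu.
have [puv [hpuv _]] := @Piup_ex _ J _ v (ltnSn _) pv.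
have [puu [hpuu extuu]] := @Piup_ex _ J _ u (ltnSn _) pu.
have vjk : ~ (exists j : 'I_n, [/\ val i < val j < val k, diff_regions J i j k &
               val (v k) < val (v i) < val (v j)]) ->
    forall j : 'I_n, val i < val j -> val j < val k -> diff_regions J i j k ->
    val (v j) < val (v k).
  move=> nj j h1 h2 d.
  case: (ltngtP (val (v j)) (val (v k))) => // h.
    exfalso; apply: nj; exists j; split => //; first by rewrite h1 h2.
    have := vneq v (a := j) (b := i).
    have ji : j != i by apply/eqP => eji; rewrite eji ltnn in h1.
    move/(_ ji); rewrite ?vo in hv h *; move=> hji.
    clear -hv h hji; apply/andP; split; lia.
  by move/pinjv: h => ejk; rewrite ejk ltnn in h2.
have P01 : (exists i j k : 'I_n,
          [/\ (val i < val j < val k)%N, diff_regions J i j k,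
              (val (v k) < val (v i) < val (v j))%N, val (v i) = (val (v k)).+1 &
              inversions v :\: inversions u = [set (i, k)]]) -> Pidown J u = Pidown J v.
  move=> [i' [j' [k' [/andP[h1 h2] d /andP[h3 h4] h5 h6]]]].
  rewrite (Pidown_eq hpdv); apply: Pidown_eq.
  move: hpdv => /and4P[pp ap lp fp]; apply/and4P; split => //.
    apply/subsetP => z hz; have hzv := subsetP lp _ hz.
    apply/negPn/negP => hzu.
    have : z \in inversions v :\: inversions u by rewrite inE hzu hzv.
    rewrite h6 inE => /eqP ez; subst z.
    by move: hz; apply/negP; apply: (liftA h1 h2 d h5 h4 ap lp).
  apply/forallP => q; apply/implyP => /andP[/andP[pq aq] lq].
  move/forallP: fp => /(_ q)/implyP; apply; rewrite pq aq /=.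
  exact: subset_trans lq le.
have P10 : Pidown J u = Pidown J v -> (exists i j k : 'I_n,
          [/\ (val i < val j < val k)%N, diff_regions J i j k,
              (val (v k) < val (v i) < val (v j))%N, val (v i) = (val (v k)).+1 &
              inversions v :\: inversions u = [set (i, k)]]).
  move=> E.
  case: (classic (exists j : 'I_n, [/\ val i < val j < val k, diff_regions J i j k &
               val (v k) < val (v i) < val (v j)])) => [[j [h1 h2 h3]]|nj].
    by exists i, j, k; split.
  exfalso.
  have hk := extdv i k (conj hik (vjk nj)).
  rewrite (Pidown_eq hpdv) (Pidown_eq hpdu) in E; subst pdu.
  move: hpdu => /and4P[_ _ lp _].
  by move: hniu; rewrite (subsetP lp _ hk).
have P02 : (exists i j k : 'I_n,
          [/\ (val i < val j < val k)%N, diff_regions J i j k,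
              (val (v k) < val (v i) < val (v j))%N, val (v i) = (val (v k)).+1 &
              inversions v :\: inversions u = [set (i, k)]]) -> Piup J u = Piup J v.
  move=> [i' [j' [k' [/andP[h1 h2] d /andP[h3 h4] h5 h6]]]].
  have h12 : val i' < val k' by apply: ltn_trans h2.
  have eu := cover_u le h6 h12 h5.
  rewrite (Piup_eq hpuu); symmetry; apply: Piup_eq.
  move: hpuu => /and4P[pp ap lp fp]; apply/and4P; split => //.
    apply/subsetP => z hz.
    case: (eqVneq z (i', k')) => [->|nz].
      have ji : j' != i' by apply/eqP => eji; rewrite eji ltnn in h1.
      have jk : j' != k' by apply/eqP => ejk; rewrite ejk ltnn in h2.
      apply: (liftA' (w := u) h1 h2 d _ _ ap lp).
        by rewrite eu sw_a sw_b.
      by rewrite eu sw_b sw_o.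
    apply: (subsetP lp); apply/negPn/negP => hzu.
    have : z \in inversions v :\: inversions u by rewrite inE hzu hz.
    by rewrite h6 inE (negbTE nz).
  apply/forallP => q; apply/implyP => /andP[/andP[pq aq] lq].
  move/forallP: fp => /(_ q)/implyP; apply; rewrite pq aq /=.
  exact: subset_trans le lq.
have P20 : Piup J u = Piup J v -> (exists i j k : 'I_n,
          [/\ (val i < val j < val k)%N, diff_regions J i j k,
              (val (v k) < val (v i) < val (v j))%N, val (v i) = (val (v k)).+1 &
              inversions v :\: inversions u = [set (i, k)]]).
  move=> E.
  case: (classic (exists j : 'I_n, [/\ val i < val j < val k, diff_regions J i j k &
               val (v k) < val (v i) < val (v j)])) => [[j [h1 h2 h3]]|nj].
    by exists i, j, k; split.
  exfalso.
  have eu := cover_u le e hik' hv.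
  have Iu : Iup J u i k.
    split => // j h1 h2 d.
    have ji : j != i by apply/eqP => eji; rewrite eji ltnn in h1.
    have jk : j != k by apply/eqP => ejk; rewrite ejk ltnn in h2.
    rewrite eu sw_a sw_o //; exact: (vjk nj).
  have hk := extuu i k Iu.
  rewrite (Piup_eq hpuv) (Piup_eq hpuu) in E; subst puu.
  move: hpuv => /and4P[_ _ lp _].
  by move: hk; rewrite (subsetP lp _ hik).
tfae.
- exact: P01.
- by move=> h; apply: P02; apply: P10.
- exact: P20.
Qed.
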